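(* Suppose the pair $(A,B)$ satisfies the Kalman condition (K) with integer $d_*$, and that $F$ is smooth and globally Lipschitz. Suppose there is a sequence $(y^{(n)})_{n\in\mathbb{N}}$ in $\mathbb{R}^d$ bounded away from $0$ such that $$\lim_{n\to\infty}|y^{(n)}|^{k-1}\,\|D^kF(y^{(n)})\|=0\quad\text{for each }k=1,2,\dots,d_*-1.$$ Then there exists a point $x_0\in\mathbb{R}^d$ at which the weak Hörmander condition (H) holds.
   Context: $A:\mathbb{R}^d\to\mathbb{R}^d$, $B:\mathbb{R}^n\to\mathbb{R}^d$ linear, $n\le d$, $F:\mathbb{R}^d\to\mathbb{R}^d$; $D^kF(y)$ is the $k$th Fréchet derivative at $y$ (a $k$-linear map) with its operator norm. $e_1,\dots,e_n$ is the standard basis of $\mathbb{R}^n$. (K) the columns of $B, AB, A^2B,\dots$ span $\mathbb{R}^d$; $d_*$ denotes the smallest positive integer such that $\operatorname{span}\{A^jBe_i: 0\le j\le d_*-1,\ 1\le i\le n\}=\mathbb{R}^d$. (H) at $x_0$: the vector fields $V_0$, $\mathcal{L}_{V_2}V_1$, $\mathcal{L}_{V_3}\mathcal{L}_{V_2}V_1,\dots$ with $V_0\in\mathcal{B}$ and $V_1,V_2,\dots\in\mathcal{B}\cup\{A+F\}$ span $\mathbb{R}^d$ at $x_0$, where $\mathcal{B}=\{Be_1,\dots,Be_n\}$ (constant vector fields), $A+F$ is the vector field $x\mapsto Ax+F(x)$, and $\mathcal{L}_GH=DH[G]-DG[H]$. *)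

(* Defs.v *)
From Stdlib Require Import Reals List ClassicalEpsilon.
From mathcomp Require Import ssreflect ssrfun ssrbool eqtype ssrnat fintype bigop.

Set Implicit Arguments.
Unset Strict Implicit.

Local Open Scope R_scope.

Definition vec (d : nat) := 'I_d -> R.

Definition vzero {d} : vec d := fun _ => 0.
Definition vadd {d} (u v : vec d) : vec d := fun i => u i + v i.
Definition vsub {d} (u v : vec d) : vec d := fun i => u i - v i.
Definition vscale {d} (a : R) (u : vec d) : vec d := fun i => a * u i.

Definition vnorm {d} (v : vec d) : R :=
  sqrt (\big[Rplus/0]_(i < d) (v i * v i)).

Definition e_basis {n} (i : 'I_n) : vec n := fun j => if i == j then 1 else 0.

Definition is_linear {m d} (L : vec m -> vec d) : Prop :=
  (forall u v, L (vadd u v) = vadd (L u) (L v)) /\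
  (forall a u, L (vscale a u) = vscale a (L u)).

Definition lin_comb {d} (l : list (R * vec d)) : vec d :=
  fold_right (fun p acc => vadd (vscale (fst p) (snd p)) acc) vzero l.

Definition spans_Rd {d} (P : vec d -> Prop) : Prop :=
  forall v : vec d, exists l : list (R * vec d),
    Forall (fun p => P (snd p)) l /\ v = lin_comb l.

Definition is_frechet {d} (f : vec d -> vec d) (y : vec d) (L : vec d -> vec d) : Prop :=
  is_linear L /\
  forall eps, 0 < eps -> exists delta, 0 < delta /\
    forall h : vec d, vnorm h < delta ->
      vnorm (vsub (vsub (f (vadd y h)) (f y)) (L h)) <= eps * vnorm h.

Definition frechet_differentiable {d} (f : vec d -> vec d) (y : vec d) : Prop :=
  exists L, is_frechet f y L.

Definition Dfr {d} (f : vec d -> vec d) (y : vec d) : vec d -> vec d :=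
  epsilon (inhabits (fun _ => vzero)) (fun L => is_frechet f y L).

(* k-th derivative D^k F(y), as a k-linear map evaluated on (hs 0, ..., hs (k-1)):
   D^0 F(y) = F(y),
   D^{k+1} F(y)[h_0, h_1, ..., h_k] = D( z |-> D^k F(z)[h_1, ..., h_k] )(y)[h_0]. *)
Fixpoint Dk {d} (k : nat) (F : vec d -> vec d) (y : vec d) (hs : nat -> vec d) : vec d :=
  match k with
  | O => F y
  | S k' => Dfr (fun z => Dk k' F z (fun i => hs (S i))) y (hs O)
  end.

Definition smooth {d} (F : vec d -> vec d) : Prop :=
  forall (k : nat) (hs : nat -> vec d) (y : vec d),
    frechet_differentiable (fun z => Dk k F z hs) y.

Definition Dk_values {d} (k : nat) (F : vec d -> vec d) (y : vec d) : R -> Prop :=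
  fun r => exists hs : nat -> vec d,
    (forall i, (i < k)%nat -> vnorm (hs i) <= 1) /\ r = vnorm (Dk k F y hs).

Definition Dk_opnorm {d} (k : nat) (F : vec d -> vec d) (y : vec d) : R :=
  epsilon (inhabits 0) (fun r => is_lub (Dk_values k F y) r).

Definition globally_lipschitz {d} (F : vec d -> vec d) : Prop :=
  exists K : R, forall x y, vnorm (vsub (F x) (F y)) <= K * vnorm (vsub x y).

Definition AjBe {n d} (A : vec d -> vec d) (B : vec n -> vec d) (j : nat) (i : 'I_n) : vec d :=
  Nat.iter j A (B (e_basis i)).

Definition kalman {n d} (A : vec d -> vec d) (B : vec n -> vec d) : Prop :=
  spans_Rd (fun v => exists (j : nat) (i : 'I_n), v = AjBe A B j i).

Definition kalman_span_upto {n d} (A : vec d -> vec d) (B : vec n -> vec d) (m : nat) : Prop :=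
  spans_Rd (fun v => exists (j : nat) (i : 'I_n), (j <= m - 1)%nat /\ v = AjBe A B j i).

Definition kalman_index {n d} (A : vec d -> vec d) (B : vec n -> vec d) (ds : nat) : Prop :=
  (0 < ds)%nat /\ kalman_span_upto A B ds /\
  forall m, (0 < m)%nat -> (m < ds)%nat -> ~ kalman_span_upto A B m.

Definition lie {d} (G H : vec d -> vec d) : vec d -> vec d :=
  fun x => vsub (Dfr H x (G x)) (Dfr G x (H x)).

Definition in_Bfields {n d} (B : vec n -> vec d) (V : vec d -> vec d) : Prop :=
  exists i : 'I_n, V = (fun _ => B (e_basis i)).

Definition in_BAF {n d} (A : vec d -> vec d) (B : vec n -> vec d) (F : vec d -> vec d)
  (V : vec d -> vec d) : Prop :=
  in_Bfields B V \/ V = (fun x => vadd (A x) (F x)).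

Inductive bracket {n d} (A : vec d -> vec d) (B : vec n -> vec d) (F : vec d -> vec d)
  : (vec d -> vec d) -> Prop :=
  | br_base V1 V2 : in_BAF A B F V1 -> in_BAF A B F V2 -> bracket A B F (lie V2 V1)
  | br_step W V : bracket A B F W -> in_BAF A B F V -> bracket A B F (lie V W).

Definition hormander {n d} (A : vec d -> vec d) (B : vec n -> vec d) (F : vec d -> vec d)
  (x0 : vec d) : Prop :=
  spans_Rd (fun v => exists V, (in_Bfields B V \/ bracket A B F V) /\ v = V x0).

(* Main.v *)
Require Import Defs.
From Stdlib Require Import Reals Lra Lia Psatz ClassicalEpsilon FunctionalExtensionality List.
From HB Require Import structures.
From mathcomp Require Import ssreflect ssrfun ssrbool eqtype ssrnat seq fintype bigop.
From mathcomp Require Import zify.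
Set Implicit Arguments.
Unset Strict Implicit.
Local Open Scope R_scope.

Lemma Rplus_assoc' : associative Rplus. Proof. move=> *; ring. Qed.
Lemma Rmult_assoc' : associative Rmult. Proof. move=> *; ring. Qed.
HB.instance Definition _ := Monoid.isComLaw.Build R 0 Rplus Rplus_assoc' Rplus_comm Rplus_0_l.
HB.instance Definition _ := Monoid.isComLaw.Build R 1 Rmult Rmult_assoc' Rmult_comm Rmult_1_l.

Section V.
Variable d : nat.
Implicit Types u v w : vec d.

Lemma vadd_assoc : associative (@vadd d).
Proof. move=> u v w; apply: functional_extensionality => i; rewrite /vadd; ring. Qed.
Lemma vadd_comm : commutative (@vadd d).
Proof. move=> u v; apply: functional_extensionality => i; rewrite /vadd; ring. Qed.
Lemma vadd0v : left_id (@vzero d) (@vadd d).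
Proof. move=> u; apply: functional_extensionality => i; rewrite /vadd /vzero; ring. Qed.
End V.

HB.instance Definition _ d := Monoid.isComLaw.Build (vec d) vzero (@vadd d)
  (@vadd_assoc d) (@vadd_comm d) (@vadd0v d).


Section V2.
Variable d : nat.
Implicit Types u v w : vec d.

Definition nrm1 (v : vec d) : R := \big[Rplus/0]_(i < d) Rabs (v i).

Lemma sum_le (I : Type) (r : seq I) (P : pred I) (f g : I -> R) :
  (forall i, P i -> f i <= g i) ->
  \big[Rplus/0]_(i <- r | P i) f i <= \big[Rplus/0]_(i <- r | P i) g i.
Proof. move=> H; apply: (big_ind2 (fun a b => a <= b)); [lra| |]; first by move=> *; lra. exact: H. Qed.

Lemma sum_ge0 (I : Type) (r : seq I) (P : pred I) (f : I -> R) :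
  (forall i, P i -> 0 <= f i) -> 0 <= \big[Rplus/0]_(i <- r | P i) f i.
Proof. move=> H; apply: (big_ind (fun a => 0 <= a)); [lra| |]; first by move=> *; lra. exact: H. Qed.

Lemma sum_plus (I : Type) (r : seq I) (f g : I -> R) :
  \big[Rplus/0]_(i <- r) (f i + g i) = \big[Rplus/0]_(i <- r) f i + \big[Rplus/0]_(i <- r) g i.
Proof. by rewrite big_split. Qed.

Lemma sum_scal (I : Type) (r : seq I) (a : R) (f : I -> R) :
  \big[Rplus/0]_(i <- r) (a * f i) = a * \big[Rplus/0]_(i <- r) f i.
Proof. elim: r => [|x r IH]; rewrite ?big_nil ?big_cons; [ring | rewrite IH; ring]. Qed.

Lemma sum_abs (I : Type) (r : seq I) (f : I -> R) :
  Rabs (\big[Rplus/0]_(i <- r) f i) <= \big[Rplus/0]_(i <- r) Rabs (f i).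
Proof.
elim: r => [|x r IH]; rewrite ?big_nil ?big_cons; first by rewrite Rabs_R0; lra.
by apply: Rle_trans (Rabs_triang _ _) _; lra.
Qed.

Lemma Rabs0 x : Rabs x = 0 -> x = 0.
Proof. move=> H; case: (Req_dec x 0) => // /Rabs_pos_lt; lra. Qed.

Lemma le_add_nonneg a b : 0 <= b -> a <= a + b.
Proof. lra. Qed.

Lemma nrm1_ge0 v : 0 <= nrm1 v.
Proof. apply: sum_ge0 => i _; exact: Rabs_pos. Qed.

Lemma coord_le_nrm1 v i : Rabs (v i) <= nrm1 v.
Proof.
rewrite /nrm1 (bigD1 i) //=. apply: le_add_nonneg; apply: sum_ge0 => j _; exact: Rabs_pos.
Qed.

Lemma nrm1_add u v : nrm1 (vadd u v) <= nrm1 u + nrm1 v.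
Proof. rewrite /nrm1 -sum_plus; apply: sum_le => i _; exact: Rabs_triang. Qed.

Lemma nrm1_scale a v : nrm1 (vscale a v) = Rabs a * nrm1 v.
Proof. rewrite /nrm1 -sum_scal; apply: eq_bigr => i _; rewrite /vscale Rabs_mult //. Qed.

Lemma vsub_addopp u v : vsub u v = vadd u (vscale (-1) v).
Proof. apply: functional_extensionality => i; rewrite /vsub /vadd /vscale; ring. Qed.

Lemma nrm1_sub u v : nrm1 (vsub u v) <= nrm1 u + nrm1 v.
Proof. rewrite vsub_addopp. apply: Rle_trans (nrm1_add _ _) _. rewrite nrm1_scale Rabs_Ropp Rabs_R1; lra. Qed.

Lemma nrm1_opp_sub u v : nrm1 (vsub u v) = nrm1 (vsub v u).
Proof. rewrite /nrm1; apply: eq_bigr => i _; rewrite /vsub Rabs_minus_sym //. Qed.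

Lemma nrm1_zero : nrm1 vzero = 0.
Proof. rewrite /nrm1 big1 // => i _; rewrite /vzero Rabs_R0 //. Qed.

Lemma nrm1_eq0 v : nrm1 v = 0 -> v = vzero.
Proof.
move=> H; apply: functional_extensionality => i; have := coord_le_nrm1 v i.
have := Rabs_pos (v i); rewrite H /vzero => ? ?; have : Rabs (v i) = 0 by lra.
by apply: Rabs0.
Qed.

Lemma nrm1_triang3 u v w : nrm1 (vsub u w) <= nrm1 (vsub u v) + nrm1 (vsub v w).
Proof.
have -> : vsub u w = vadd (vsub u v) (vsub v w) by apply: functional_extensionality => i; rewrite /vsub /vadd; ring.
exact: nrm1_add.
Qed.

Lemma sumsq_le v : \big[Rplus/0]_(i < d) (v i * v i) <= (nrm1 v) ^ 2.
Proof.
rewrite /nrm1.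
suff [] : \big[Rplus/0]_(i < d) (v i * v i) <= (\big[Rplus/0]_(i < d) Rabs (v i)) ^ 2 /\ 0 <= \big[Rplus/0]_(i < d) Rabs (v i) by [].
apply: (big_rec2 (fun s q => s <= q ^ 2 /\ 0 <= q) ) => [|i s q _ [H1 H2]]; first (split; lra).
split; last by have := Rabs_pos (v i); lra.
have : Rabs (v i) * Rabs (v i) = v i * v i by rewrite -Rabs_mult; apply: Rabs_right; nra.
have := Rabs_pos (v i); nra.
Qed.

Lemma sumsq_ge0 v : 0 <= \big[Rplus/0]_(i < d) (v i * v i).
Proof. apply: sum_ge0 => i _; nra. Qed.

Lemma vnorm_le_nrm1 v : vnorm v <= nrm1 v.
Proof.
rewrite /vnorm. rewrite -(sqrt_pow2 (nrm1 v)); last exact: nrm1_ge0.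
apply: sqrt_le_1_alt; exact: sumsq_le.
Qed.

Lemma vnorm_ge0 v : 0 <= vnorm v.
Proof. exact: sqrt_pos. Qed.

Lemma coord_le_vnorm v i : Rabs (v i) <= vnorm v.
Proof.
rewrite /vnorm -sqrt_Rsqr_abs; apply: sqrt_le_1_alt.
rewrite (bigD1 i) //= /Rsqr. apply: le_add_nonneg; apply: sum_ge0 => j _; nra.
Qed.



Lemma sum_const_ord (c : R) : \big[Rplus/0]_(i < d) c = INR d * c.
Proof.
rewrite big_const_ord. elim: d => [|k IH]; first (rewrite /=; ring).
rewrite iterS IH S_INR; ring.
Qed.

Lemma nrm1_le_vnorm v : nrm1 v <= INR d * vnorm v.
Proof.
rewrite /nrm1 -sum_const_ord; apply: sum_le => i _; exact: coord_le_vnorm.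
Qed.

Lemma vnorm_sq v : vnorm v ^ 2 = \big[Rplus/0]_(i < d) (v i * v i).
Proof. rewrite /vnorm /= Rmult_1_r sqrt_sqrt //; exact: sumsq_ge0. Qed.

Lemma vnorm_scale a v : vnorm (vscale a v) = Rabs a * vnorm v.
Proof.
rewrite /vnorm. have -> : \big[Rplus/0]_(i < d) (vscale a v i * vscale a v i) = (a*a) * \big[Rplus/0]_(i < d) (v i * v i).
  rewrite -sum_scal; apply: eq_bigr => i _; rewrite /vscale; ring.
rewrite sqrt_mult; [|nra|exact: sumsq_ge0]. rewrite -[a*a]/(Rsqr a) sqrt_Rsqr_abs //.
Qed.

Lemma vnorm_eq0 v : vnorm v = 0 -> v = vzero.
Proof.
move=> H; apply: functional_extensionality => i; have := coord_le_vnorm v i.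
have := Rabs_pos (v i); rewrite H /vzero => ? ?; have : Rabs (v i) = 0 by lra.
by apply: Rabs0.
Qed.

Lemma vnorm_zero : vnorm (@vzero d) = 0.
Proof. have := vnorm_le_nrm1 vzero; rewrite nrm1_zero; have := vnorm_ge0 vzero; lra. Qed.

Lemma vsum_coord (I : Type) (r : seq I) (f : I -> vec d) j :
  (\big[vadd/vzero]_(i <- r) f i) j = \big[Rplus/0]_(i <- r) f i j.
Proof. elim: r => [|x r IH]; rewrite ?big_nil ?big_cons //= /vadd IH //. Qed.

Lemma expand v : v = \big[vadd/vzero]_(i < d) vscale (v i) (e_basis i).
Proof.
apply: functional_extensionality => j; rewrite vsum_coord (bigD1 j) //= big1.
  by rewrite /vscale /e_basis eqxx; ring.
move=> i Hij; rewrite /vscale /e_basis (negbTE Hij); ring.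
Qed.

Lemma nrm1_vsum (I : Type) (r : seq I) (f : I -> vec d) :
  nrm1 (\big[vadd/vzero]_(i <- r) f i) <= \big[Rplus/0]_(i <- r) nrm1 (f i).
Proof.
elim: r => [|x r IH]; rewrite ?big_nil ?big_cons; first by rewrite nrm1_zero; lra.
apply: Rle_trans (nrm1_add _ _) _; lra.
Qed.

End V2.

Ltac vext := apply: functional_extensionality => ?; rewrite /vsub /vadd /vscale /vzero /=; ring.

Section Fr.
Variable d : nat.
Implicit Types u v w h x : vec d.

Definition isfr (f : vec d -> vec d) x (L : vec d -> vec d) : Prop :=
  is_linear L /\ forall eps, 0 < eps -> exists delta, 0 < delta /\
    forall h, nrm1 h < delta ->
      nrm1 (vsub (vsub (f (vadd x h)) (f x)) (L h)) <= eps * nrm1 h.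

Lemma lin_zero (L : vec d -> vec d) : is_linear L -> L vzero = vzero.
Proof.
case=> _ HS. have -> : (@vzero d) = vscale 0 vzero by vext.
rewrite HS; vext.
Qed.

Lemma lin_sub (L : vec d -> vec d) u v : is_linear L -> L (vsub u v) = vsub (L u) (L v).
Proof. move=> [HA HS]. rewrite vsub_addopp HA HS; vext. Qed.

Lemma lin_vsum (L : vec d -> vec d) (I : Type) (r : seq I) (f : I -> vec d) : is_linear L ->
  L (\big[vadd/vzero]_(i <- r) f i) = \big[vadd/vzero]_(i <- r) L (f i).
Proof.
move=> HL; elim: r => [|a r IH]; rewrite ?big_nil ?big_cons; first exact: lin_zero.
by case: HL => HA _; rewrite HA IH.
Qed.

Lemma lin_expand (L : vec d -> vec d) v : is_linear L ->
  L v = \big[vadd/vzero]_(i < d) vscale (v i) (L (e_basis i)).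
Proof.
move=> HL; rewrite {1}(expand v) lin_vsum //; apply: eq_bigr => i _.
by case: HL => _ ->.
Qed.

Definition lconst (L : vec d -> vec d) : R := \big[Rplus/0]_(i < d) nrm1 (L (e_basis i)).

Lemma lconst_ge0 L : 0 <= lconst L.
Proof. apply: sum_ge0 => i _; exact: nrm1_ge0. Qed.

Lemma lin_bound (L : vec d -> vec d) h : is_linear L -> nrm1 (L h) <= lconst L * nrm1 h.
Proof.
move=> HL; rewrite (lin_expand h HL).
apply: Rle_trans (nrm1_vsum _ _) _.
rewrite /lconst Rmult_comm -sum_scal; apply: sum_le => i _.
rewrite nrm1_scale; apply: Rmult_le_compat_r; [exact: nrm1_ge0 | exact: coord_le_nrm1].
Qed.

Lemma Dpos : 0 < INR d + 1.
Proof. have := pos_INR d; lra. Qed.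

Lemma frechet_isfr f x L : is_frechet f x L -> isfr f x L.
Proof.
case=> HL H; split => // eps Heps.
have HD := Dpos.
case: (H (eps / (INR d + 1))) => [|delta [Hd Hh]]; first by apply: Rdiv_lt_0_compat.
exists delta; split => // h Hh'.
have Hv : vnorm h < delta by have := vnorm_le_nrm1 h; lra.
have := Hh h Hv. set E := vsub _ _ => HE.
have H1 := nrm1_le_vnorm E. have H2 := vnorm_le_nrm1 h. have H3 := vnorm_ge0 h.
have H4 : INR d * (eps / (INR d + 1)) <= eps.
  apply: (Rmult_le_reg_r (INR d + 1)) => //.
  have -> : INR d * (eps / (INR d + 1)) * (INR d + 1) = INR d * eps by field; lra.
  have := pos_INR d. nra.
have := pos_INR d => H5.
have H6 : 0 <= eps / (INR d + 1) by apply: Rlt_le; apply: Rdiv_lt_0_compat.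
apply: Rle_trans H1 _.
apply: Rle_trans (Rmult_le_compat_l _ _ _ H5 HE) _.
nra.
Qed.

Lemma isfr_frechet f x L : isfr f x L -> is_frechet f x L.
Proof.
case=> HL H; split => // eps Heps.
have HD := Dpos.
case: (H (eps / (INR d + 1))) => [|delta [Hd Hh]]; first by apply: Rdiv_lt_0_compat.
exists (delta / (INR d + 1)); split; first by apply: Rdiv_lt_0_compat.
move=> h Hv.
have H6 : 0 < eps / (INR d + 1) by apply: Rdiv_lt_0_compat.
have H5 := pos_INR d.
have H2 := nrm1_le_vnorm h. have H3 := vnorm_ge0 h.
have Hn : nrm1 h < delta.
  apply: Rle_lt_trans H2 _.
  have : INR d * vnorm h <= INR d * (delta / (INR d + 1)) by apply: Rmult_le_compat_l => //; lra.
  have : INR d * (delta / (INR d + 1)) < delta.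
    apply: (Rmult_lt_reg_r (INR d + 1)) => //. rewrite Rmult_assoc /Rdiv Rmult_assoc Rinv_l; lra.
  lra.
have := Hh h Hn. set E := vsub _ _ => HE.
apply: Rle_trans (vnorm_le_nrm1 E) _. apply: Rle_trans HE _.
apply: Rle_trans (Rmult_le_compat_l _ _ _ (Rlt_le _ _ H6) H2) _.
have : eps / (INR d + 1) * INR d <= eps.
  apply: (Rmult_le_reg_r (INR d + 1)) => //. rewrite /Rdiv. 
  have -> : eps * / (INR d + 1) * INR d * (INR d + 1) = eps * INR d * ((INR d + 1) * / (INR d + 1)) by ring.
  rewrite Rinv_r; lra.
nra.
Qed.

Lemma le_eps_0 a : (forall eps, 0 < eps -> a <= eps) -> a <= 0.
Proof. move=> H; case: (Rle_lt_dec a 0) => // Ha. have := H (a/2); lra. Qed.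

Lemma isfr_unique f x L1 L2 : isfr f x L1 -> isfr f x L2 -> L1 = L2.
Proof.
move=> [HL1 H1] [HL2 H2]; apply: functional_extensionality => h.
set D := vsub (L1 h) (L2 h).
suff : nrm1 D <= 0.
  move=> HD; have := nrm1_ge0 D => HD'.
  have : nrm1 D = 0 by lra. move/nrm1_eq0; rewrite /D => E.
  apply: functional_extensionality => i; have := f_equal (fun v => v i) E; rewrite /vsub /vzero /= => Hi; lra.
apply: le_eps_0 => eps Heps.
have Hb := nrm1_ge0 h.
set e := eps / (2 * (nrm1 h + 1)).
have He : 0 < e by apply: Rdiv_lt_0_compat; lra.
case: (H1 e He) => d1 [Hd1 Hh1]; case: (H2 e He) => d2 [Hd2 Hh2].
set t := Rmin d1 d2 / (nrm1 h + 1).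
have Hmin : 0 < Rmin d1 d2 by apply: Rmin_pos.
have Ht : 0 < t by apply: Rdiv_lt_0_compat; lra.
have Hth : nrm1 (vscale t h) < Rmin d1 d2.
  rewrite nrm1_scale Rabs_right; last lra.
  rewrite /t /Rdiv. apply: (Rmult_lt_reg_r (nrm1 h + 1)); first lra.
  have -> : Rmin d1 d2 * / (nrm1 h + 1) * nrm1 h * (nrm1 h + 1) = Rmin d1 d2 * nrm1 h * ((nrm1 h + 1) * / (nrm1 h + 1)) by ring.
  rewrite Rinv_r; last lra. nra.
have Hm1 := Rmin_l d1 d2; have Hm2 := Rmin_r d1 d2.
have E1 := Hh1 _ (ltac:(lra) : nrm1 (vscale t h) < d1).
have E2 := Hh2 _ (ltac:(lra) : nrm1 (vscale t h) < d2).
have Eq : vscale t D = vsub (vsub (vsub (f (vadd x (vscale t h))) (f x)) (L2 (vscale t h)))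
   (vsub (vsub (f (vadd x (vscale t h))) (f x)) (L1 (vscale t h))).
  case: HL1 => _ ->; case: HL2 => _ ->; rewrite /D; vext.
have := nrm1_sub (vsub (vsub (f (vadd x (vscale t h))) (f x)) (L2 (vscale t h)))
   (vsub (vsub (f (vadd x (vscale t h))) (f x)) (L1 (vscale t h))).
rewrite -Eq !nrm1_scale Rabs_right; last lra.
move=> Hs. rewrite nrm1_scale Rabs_right in E1; last lra. rewrite nrm1_scale Rabs_right in E2; last lra.
have : t * nrm1 D <= t * (2 * e * nrm1 h) by lra.
move/(Rmult_le_reg_l _ _ _ Ht) => Hf.
apply: Rle_trans Hf _.
rewrite /e /Rdiv. 
have -> : 2 * (eps * / (2 * (nrm1 h + 1))) * nrm1 h = eps * (nrm1 h * / (nrm1 h + 1)).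
  field; lra.
have : nrm1 h * / (nrm1 h + 1) <= 1.
  apply: (Rmult_le_reg_r (nrm1 h + 1)); first lra.
  rewrite Rmult_assoc Rinv_l; lra.
nra.
Qed.

Lemma Dfr_isfr f x L : isfr f x L -> Dfr f x = L.
Proof.
move=> H. rewrite /Dfr. 
have Ex : exists L', is_frechet f x L' by exists L; exact: isfr_frechet.
have := epsilon_spec (inhabits (fun _ => vzero)) (fun L => is_frechet f x L) Ex.
move/frechet_isfr => H'. exact: isfr_unique H' H.
Qed.

Lemma diff_isfr f x : frechet_differentiable f x -> isfr f x (Dfr f x).
Proof.
move=> Ex. apply: frechet_isfr. exact: (epsilon_spec (inhabits (fun _ => vzero)) (fun L => is_frechet f x L) Ex).
Qed.

Lemma isfr_ext f g x L L' : (forall z, f z = g z) -> (forall h, L h = L' h) -> isfr f x L -> isfr g x L'.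
Proof.
move=> Hf HL. have -> : g = f by apply: functional_extensionality => z; rewrite Hf.
have -> : L' = L by apply: functional_extensionality => z; rewrite HL. done.
Qed.

Lemma isfr_lin_part f x L : isfr f x L -> is_linear L.
Proof. by case. Qed.

Lemma isfr_cont f x L : isfr f x L -> forall eps, 0 < eps -> exists delta, 0 < delta /\
  forall h, nrm1 h < delta -> nrm1 (vsub (f (vadd x h)) (f x)) <= eps.
Proof.
move=> [HL H] eps Heps.
case: (H 1 Rlt_0_1) => d1 [Hd1 Hh].
have HC := lconst_ge0 L.
exists (Rmin d1 (eps / (1 + lconst L))); split.
  apply: Rmin_pos => //; apply: Rdiv_lt_0_compat; lra.
move=> h Hh'. have Hm1 := Rmin_l d1 (eps / (1 + lconst L)); have Hm2 := Rmin_r d1 (eps / (1 + lconst L)).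
have E := Hh h ltac:(lra).
have Eq : vsub (f (vadd x h)) (f x) = vadd (vsub (vsub (f (vadd x h)) (f x)) (L h)) (L h) by vext.
rewrite Eq. apply: Rle_trans (nrm1_add _ _) _.
have := lin_bound h HL. have := nrm1_ge0 h => Hn.
have : nrm1 h <= eps / (1 + lconst L) by lra.
move=> Hle Hb.
have : (1 + lconst L) * nrm1 h <= eps.
  have -> : eps = (1 + lconst L) * (eps / (1 + lconst L)) by field; lra.
  apply: Rmult_le_compat_l; lra.
lra.
Qed.

Lemma lin_is_linear_add (L1 L2 : vec d -> vec d) : is_linear L1 -> is_linear L2 ->
  is_linear (fun h => vadd (L1 h) (L2 h)).
Proof. move=> [A1 S1] [A2 S2]; split => *; rewrite ?A1 ?A2 ?S1 ?S2; vext. Qed.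

Lemma lin_is_linear_sub (L1 L2 : vec d -> vec d) : is_linear L1 -> is_linear L2 ->
  is_linear (fun h => vsub (L1 h) (L2 h)).
Proof. move=> [A1 S1] [A2 S2]; split => *; rewrite ?A1 ?A2 ?S1 ?S2; vext. Qed.

Lemma lin_is_linear_scale a (L1 : vec d -> vec d) : is_linear L1 ->
  is_linear (fun h => vscale a (L1 h)).
Proof. move=> [A1 S1]; split => *; rewrite ?A1 ?S1; vext. Qed.

Lemma lin_is_linear_comp (L1 L2 : vec d -> vec d) : is_linear L1 -> is_linear L2 ->
  is_linear (fun h => L1 (L2 h)).
Proof. move=> [A1 S1] [A2 S2]; split => *; rewrite ?A2 ?S2 ?A1 ?S1 //. Qed.

Lemma lin_is_linear_zero : is_linear (fun _ : vec d => @vzero d).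
Proof. split => *; vext. Qed.

Lemma lin_is_linear_coord (L1 : vec d -> vec d) (j : 'I_d) (w : vec d) : is_linear L1 ->
  is_linear (fun h => vscale (L1 h j) w).
Proof. move=> [A1 S1]; split => *; rewrite ?A1 ?S1; vext. Qed.

Lemma isfr_const (c : vec d) x : isfr (fun _ => c) x (fun _ => vzero).
Proof.
split; first exact: lin_is_linear_zero.
move=> eps He; exists 1; split; first lra. move=> h _.
have -> : vsub (vsub c c) vzero = (@vzero d) by vext.
rewrite nrm1_zero; have := nrm1_ge0 h; nra.
Qed.

Lemma isfr_lin (L : vec d -> vec d) x : is_linear L -> isfr L x L.
Proof.
move=> HL; split => // eps He; exists 1; split; first lra. move=> h _.
case: (HL) => HA _.
have -> : vsub (vsub (L (vadd x h)) (L x)) (L h) = (@vzero d) by rewrite HA; vext.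
rewrite nrm1_zero; have := nrm1_ge0 h; nra.
Qed.

Lemma isfr_add f g x Lf Lg : isfr f x Lf -> isfr g x Lg ->
  isfr (fun z => vadd (f z) (g z)) x (fun h => vadd (Lf h) (Lg h)).
Proof.
move=> [HLf Hf] [HLg Hg]; split; first exact: lin_is_linear_add.
move=> eps He.
case: (Hf (eps/2)) => [|d1 [Hd1 H1]]; first lra. case: (Hg (eps/2)) => [|d2 [Hd2 H2]]; first lra.
exists (Rmin d1 d2); split; first exact: Rmin_pos.
move=> h Hh. have Hm1 := Rmin_l d1 d2; have Hm2 := Rmin_r d1 d2.
have E1 := H1 h ltac:(lra). have E2 := H2 h ltac:(lra).
have -> : vsub (vsub (vadd (f (vadd x h)) (g (vadd x h))) (vadd (f x) (g x))) (vadd (Lf h) (Lg h))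
  = vadd (vsub (vsub (f (vadd x h)) (f x)) (Lf h)) (vsub (vsub (g (vadd x h)) (g x)) (Lg h)) by vext.
apply: Rle_trans (nrm1_add _ _) _; lra.
Qed.

Lemma isfr_scale a f x Lf : isfr f x Lf ->
  isfr (fun z => vscale a (f z)) x (fun h => vscale a (Lf h)).
Proof.
move=> [HLf Hf]; split; first exact: lin_is_linear_scale.
move=> eps He.
case: (Hf (eps/(Rabs a + 1))) => [|d1 [Hd1 H1]]; first (apply: Rdiv_lt_0_compat; have := Rabs_pos a; lra).
exists d1; split => // h Hh. have E := H1 h Hh.
have -> : vsub (vsub (vscale a (f (vadd x h))) (vscale a (f x))) (vscale a (Lf h))
  = vscale a (vsub (vsub (f (vadd x h)) (f x)) (Lf h)) by vext.
rewrite nrm1_scale. have Ha := Rabs_pos a. have Hn := nrm1_ge0 h.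
apply: Rle_trans (Rmult_le_compat_l _ _ _ Ha E) _.
have : Rabs a * (eps / (Rabs a + 1)) <= eps.
  apply: (Rmult_le_reg_r (Rabs a + 1)); first lra.
  have -> : Rabs a * (eps / (Rabs a + 1)) * (Rabs a + 1) = Rabs a * eps by field; lra. nra.
nra.
Qed.

Lemma isfr_sub f g x Lf Lg : isfr f x Lf -> isfr g x Lg ->
  isfr (fun z => vsub (f z) (g z)) x (fun h => vsub (Lf h) (Lg h)).
Proof.
move=> Hf Hg. have := isfr_add Hf (isfr_scale (-1) Hg).
apply: isfr_ext => *; vext.
Qed.

Lemma isfr_comp_lin (A : vec d -> vec d) f x L : is_linear A -> isfr f x L ->
  isfr (fun z => A (f z)) x (fun h => A (L h)).
Proof.
move=> HA [HL Hf]; split; first exact: lin_is_linear_comp.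
move=> eps He. have HC := lconst_ge0 A.
case: (Hf (eps/(lconst A + 1))) => [|d1 [Hd1 H1]]; first (apply: Rdiv_lt_0_compat; lra).
exists d1; split => // h Hh. have E := H1 h Hh.
have -> : vsub (vsub (A (f (vadd x h))) (A (f x))) (A (L h)) = A (vsub (vsub (f (vadd x h)) (f x)) (L h)).
  by rewrite !lin_sub.
apply: Rle_trans (lin_bound _ HA) _.
have Hn := nrm1_ge0 h.
apply: Rle_trans (Rmult_le_compat_l _ _ _ HC E) _.
have : lconst A * (eps / (lconst A + 1)) <= eps.
  apply: (Rmult_le_reg_r (lconst A + 1)); first lra.
  have -> : lconst A * (eps / (lconst A + 1)) * (lconst A + 1) = lconst A * eps by field; lra. nra.
nra.
Qed.

Lemma isfr_vsum (I : Type) (r : seq I) (f : I -> vec d -> vec d) (L : I -> vec d -> vec d) x :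
  (forall i, isfr (f i) x (L i)) ->
  isfr (fun z => \big[vadd/vzero]_(i <- r) f i z) x (fun h => \big[vadd/vzero]_(i <- r) L i h).
Proof.
move=> H; elim: r => [|a r IH].
  apply: isfr_ext (isfr_const vzero x) => *; rewrite big_nil //.
apply: isfr_ext (isfr_add (H a) IH) => *; rewrite big_cons //.
Qed.

Lemma isfr_prod (u w : vec d -> vec d) Du Dw x (j : 'I_d) : isfr u x Du -> isfr w x Dw ->
  isfr (fun z => vscale (u z j) (w z)) x (fun h => vadd (vscale (Du h j) (w x)) (vscale (u x j) (Dw h))).
Proof.
move=> Hu Hw. have Hwc := isfr_cont Hw.
case: Hu => HLu Hu; case: Hw => HLw Hw'.
split.
  apply: lin_is_linear_add; [exact: lin_is_linear_coord | exact: lin_is_linear_scale].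
move=> eps He.
set W := nrm1 (w x). set a := u x j. set Cu := lconst Du.
have HW : 0 <= W := nrm1_ge0 _. have Ha : 0 <= Rabs a := Rabs_pos _. have HC : 0 <= Cu := lconst_ge0 _.
set e1 := eps / (3 * (W + 1)). set e2 := Rmin 1 (eps / (3 * (Cu + 1))). set e3 := eps / (3 * (Rabs a + 1)).
have He1 : 0 < e1 by apply: Rdiv_lt_0_compat; lra.
have He2 : 0 < e2 by apply: Rmin_pos; [lra | apply: Rdiv_lt_0_compat; lra].
have He3 : 0 < e3 by apply: Rdiv_lt_0_compat; lra.
case: (Hu e1 He1) => d1 [Hd1 H1]. case: (Hwc e2 He2) => d2 [Hd2 H2]. case: (Hw' e3 He3) => d3 [Hd3 H3].
exists (Rmin d1 (Rmin d2 d3)); split; first by apply: Rmin_pos => //; apply: Rmin_pos.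
move=> h Hh.
have Hm1 := Rmin_l d1 (Rmin d2 d3); have Hm2 := Rmin_r d1 (Rmin d2 d3).
have Hm3 := Rmin_l d2 d3; have Hm4 := Rmin_r d2 d3.
have E1 := H1 h ltac:(lra). have E2 := H2 h ltac:(lra). have E3 := H3 h ltac:(lra).
set eu := vsub (vsub (u (vadd x h)) (u x)) (Du h) in E1.
set dw := vsub (w (vadd x h)) (w x) in E2.
set ew := vsub (vsub (w (vadd x h)) (w x)) (Dw h) in E3.
have -> : vsub (vsub (vscale (u (vadd x h) j) (w (vadd x h))) (vscale (u x j) (w x)))
     (vadd (vscale (Du h j) (w x)) (vscale (u x j) (Dw h)))
  = vadd (vadd (vscale (eu j) (w (vadd x h))) (vscale (Du h j) dw)) (vscale a ew).
  rewrite /eu /dw /ew /a; vext.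
apply: Rle_trans (nrm1_add _ _) _. apply: Rle_trans (Rplus_le_compat_r _ _ _ (nrm1_add _ _)) _.
rewrite !nrm1_scale.
have Hn := nrm1_ge0 h.
have T1 : Rabs (eu j) * nrm1 (w (vadd x h)) <= e1 * nrm1 h * (W + 1).
  have Hwx : nrm1 (w (vadd x h)) <= W + 1.
    have -> : w (vadd x h) = vadd (w x) dw by rewrite /dw; vext.
    apply: Rle_trans (nrm1_add _ _) _. have := Rmin_l 1 (eps / (3 * (Cu + 1))). rewrite -/e2 -/W. lra.
  apply: Rmult_le_compat; [exact: Rabs_pos | exact: nrm1_ge0 | | exact: Hwx].
  exact: Rle_trans (coord_le_nrm1 _ _) E1.
have T2 : Rabs (Du h j) * nrm1 dw <= Cu * nrm1 h * (eps / (3 * (Cu + 1))).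
  apply: Rmult_le_compat; [exact: Rabs_pos | exact: nrm1_ge0 | | ].
    exact: Rle_trans (coord_le_nrm1 _ _) (lin_bound _ HLu).
  have := Rmin_r 1 (eps / (3 * (Cu + 1))). rewrite -/e2. lra.
have T3 : Rabs a * nrm1 ew <= Rabs a * (e3 * nrm1 h) by apply: Rmult_le_compat_l.
have F1 : e1 * nrm1 h * (W + 1) = eps / 3 * nrm1 h by rewrite /e1; field; lra.
have F2 : Cu * nrm1 h * (eps / (3 * (Cu + 1))) <= eps / 3 * nrm1 h.
  have -> : Cu * nrm1 h * (eps / (3 * (Cu + 1))) = (eps / 3 * nrm1 h) * (Cu / (Cu + 1)) by field; lra.
  have : Cu / (Cu + 1) <= 1 by apply: (Rmult_le_reg_r (Cu + 1)); [lra | field_simplify; lra].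
  have : 0 <= eps / 3 * nrm1 h by apply: Rmult_le_pos; lra.
  nra.
have F3 : Rabs a * (e3 * nrm1 h) <= eps / 3 * nrm1 h.
  have -> : Rabs a * (e3 * nrm1 h) = (eps / 3 * nrm1 h) * (Rabs a / (Rabs a + 1)) by rewrite /e3; field; lra.
  have : Rabs a / (Rabs a + 1) <= 1 by apply: (Rmult_le_reg_r (Rabs a + 1)); [lra | field_simplify; lra].
  have : 0 <= eps / 3 * nrm1 h by apply: Rmult_le_pos; lra.
  nra.
lra.
Qed.

End Fr.


Section Der.
Variable d : nat.
Implicit Types u v w h x : vec d.

Definition hcons (h : vec d) (hs : nat -> vec d) : nat -> vec d :=
  fun i => match i with O => h | S i => hs i end.
Definition upd (hs : nat -> vec d) (i : nat) (w : vec d) : nat -> vec d :=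
  fun j => if j == i then w else hs j.

Lemma upd_same hs i : upd hs i (hs i) = hs.
Proof. apply: functional_extensionality => j; rewrite /upd; case: eqP => [->|] //. Qed.

Lemma upd_upd hs i v w : upd (upd hs i v) i w = upd hs i w.
Proof. apply: functional_extensionality => j; rewrite /upd; case: eqP => //. Qed.

Lemma upd_at hs i w : upd hs i w i = w.
Proof. by rewrite /upd eqxx. Qed.

Lemma upd_other hs i j w : j <> i -> upd hs i w j = hs j.
Proof. by move=> H; rewrite /upd; case: eqP. Qed.

Lemma Dfr_add f g x : frechet_differentiable f x -> frechet_differentiable g x ->
  Dfr (fun z => vadd (f z) (g z)) x = fun h => vadd (Dfr f x h) (Dfr g x h).
Proof. move=> Hf Hg; apply: Dfr_isfr; apply: isfr_add; exact: diff_isfr. Qed.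

Lemma Dfr_scale a f x : frechet_differentiable f x ->
  Dfr (fun z => vscale a (f z)) x = fun h => vscale a (Dfr f x h).
Proof. move=> Hf; apply: Dfr_isfr; apply: isfr_scale; exact: diff_isfr. Qed.

Variable F : vec d -> vec d.
Hypothesis Fs : smooth F.

Lemma Dk_isfr k hs x : isfr (fun z => Dk k F z hs) x (fun h => Dk (S k) F x (hcons h hs)).
Proof. exact: (diff_isfr (Fs k hs x)). Qed.

Lemma Dk_ext k hs hs' x : (forall i, (i < k)%nat -> hs i = hs' i) -> Dk k F x hs = Dk k F x hs'.
Proof.
elim: k hs hs' x => [|k IH] hs hs' x H //=.
have -> : (fun z => Dk k F z (fun i => hs i.+1)) = (fun z => Dk k F z (fun i => hs' i.+1)).
  apply: functional_extensionality => z; apply: IH => i Hi; exact: H.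
by rewrite H.
Qed.

Lemma Dk_slot_linear k i hs x : (i < k)%nat -> is_linear (fun v => Dk k F x (upd hs i v)).
Proof.
elim: k i hs x => [|k IH] i hs x Hi //=.
case: i Hi => [|i] Hi.
  have E : forall v, (fun j => upd hs 0%nat v j.+1) = (fun j => hs j.+1) by move=> v; apply: functional_extensionality.
  have := isfr_lin_part (Dk_isfr k (fun j => hs j.+1) x).
  case=> HA HS; split => *; rewrite !E /upd /=; [exact: HA | exact: HS].
have E : forall v, (fun j => upd hs i.+1 v j.+1) = upd (fun j => hs j.+1) i v.
  by move=> v; apply: functional_extensionality => j; rewrite /upd.
have E0 : forall v, upd hs i.+1 v 0%nat = hs 0%nat by move=> v; rewrite /upd.
case: (IH i (fun j => hs j.+1) x Hi) => _ _.
have HL : forall z, is_linear (fun v => Dk k F z (upd (fun j => hs j.+1) i v)) by move=> z; exact: IH.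
split => [u v | a u]; rewrite !E !E0.
- have -> : (fun z => Dk k F z (upd (fun j => hs j.+1) i (vadd u v))) =
     (fun z => vadd (Dk k F z (upd (fun j => hs j.+1) i u)) (Dk k F z (upd (fun j => hs j.+1) i v))).
    by apply: functional_extensionality => z; case: (HL z) => -> _.
  by rewrite Dfr_add.
- have -> : (fun z => Dk k F z (upd (fun j => hs j.+1) i (vscale a u))) =
     (fun z => vscale a (Dk k F z (upd (fun j => hs j.+1) i u))).
    by apply: functional_extensionality => z; case: (HL z) => _ ->.
  by rewrite Dfr_scale.
Qed.

Lemma Dk_slot_zero k i hs x : (i < k)%nat -> Dk k F x (upd hs i vzero) = vzero.
Proof. move=> Hi; exact: (lin_zero (Dk_slot_linear hs x Hi)). Qed.

Lemma fchoice (Q : 'I_d -> R -> Prop) : (forall j, exists M, Q j M) -> exists Mf : 'I_d -> R, forall j, Q j (Mf j).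
Proof.
move=> H; exists (fun j => epsilon (inhabits 0) (Q j)) => j; exact: epsilon_spec.
Qed.

Lemma Dk_bounded_aux k x m : (m <= k)%nat -> forall c : nat -> vec d, exists M, forall hs,
  (forall i, (i < m)%nat -> vnorm (hs i) <= 1) -> (forall i, (m <= i)%nat -> hs i = c i) ->
  nrm1 (Dk k F x hs) <= M.
Proof.
elim: m => [|m IH] Hm c.
  exists (nrm1 (Dk k F x c)) => hs _ H.
  have -> : hs = c by apply: functional_extensionality => i; apply: H.
  exact: Rle_refl.
have Hmk : (m < k)%nat by [].
case: (@fchoice (fun j M => forall hs, (forall i, (i < m)%nat -> vnorm (hs i) <= 1) ->
   (forall i, (m <= i)%nat -> hs i = upd c m (e_basis j) i) -> nrm1 (Dk k F x hs) <= M)).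
  move=> j; apply: IH; exact: ltnW.
move=> Mf HM.
exists (\big[Rplus/0]_(j < d) Rabs (Mf j)) => hs H1 H2.
have HL := Dk_slot_linear hs x Hmk.
rewrite -{1}(upd_same hs m) (lin_expand (hs m) HL).
apply: Rle_trans (nrm1_vsum _ _) _. apply: sum_le => j _.
rewrite nrm1_scale.
have Hc : Rabs (hs m j) <= 1 by apply: Rle_trans (coord_le_vnorm _ _) (H1 m (ltnSn m)).
have Hb : nrm1 (Dk k F x (upd hs m (e_basis j))) <= Mf j.
  apply: HM.
  - move=> i Hi; rewrite upd_other; first by apply: H1; apply: ltnW.
    by move=> E; rewrite E ltnn in Hi.
  - move=> i Hi; rewrite /upd; case: eqP => // /eqP Hne.
    apply: H2. by rewrite ltn_neqAle eq_sym Hne Hi.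
have := nrm1_ge0 (Dk k F x (upd hs m (e_basis j))).
have := Rabs_pos (hs m j). have := Rle_abs (Mf j). nra.
Qed.

Lemma Dk_bounded k x : exists M, forall hs, (forall i, (i < k)%nat -> vnorm (hs i) <= 1) ->
  vnorm (Dk k F x hs) <= M.
Proof.
case: (@Dk_bounded_aux k x k (leqnn k) (fun _ => vzero)) => M HM.
exists M => hs H.
set hs' := fun i => if (i < k)%nat then hs i else vzero.
have -> : Dk k F x hs = Dk k F x hs' by apply: Dk_ext => i Hi; rewrite /hs' Hi.
apply: Rle_trans (vnorm_le_nrm1 _) _; apply: HM.
- by move=> i Hi; rewrite /hs' Hi; apply: H.
- by move=> i Hi; rewrite /hs' ltnNge Hi.
Qed.

Lemma opnorm_spec k x : is_lub (Dk_values k F x) (Dk_opnorm k F x).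
Proof.
rewrite /Dk_opnorm; apply: epsilon_spec.
case: (Dk_bounded k x) => M HM.
case: (completeness (Dk_values k F x)).
- exists M => r [hs [H ->]]; exact: HM.
- exists (vnorm (Dk k F x (fun _ => vzero))); exists (fun _ => vzero); split => //.
  move=> i _; rewrite vnorm_zero; lra.
move=> L HL; by exists L.
Qed.

Lemma opnorm_ge0 k x : 0 <= Dk_opnorm k F x.
Proof.
case: (opnorm_spec k x) => H _. apply: Rle_trans (vnorm_ge0 (Dk k F x (fun _ => vzero))) _.
apply: H; exists (fun _ => vzero); split => //. move=> i _; rewrite vnorm_zero; lra.
Qed.

Lemma prod_ge0 (I : Type) (r : seq I) (f : I -> R) : (forall i, 0 <= f i) -> 0 <= \big[Rmult/1]_(i <- r) f i.
Proof. move=> H; apply: (big_ind (fun a => 0 <= a)) => //; [lra | move=> *; nra]. Qed.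

Lemma opnorm_bound_aux k x m : (m <= k)%nat -> forall hs,
  (forall i, (m <= i)%nat -> (i < k)%nat -> vnorm (hs i) <= 1) ->
  vnorm (Dk k F x hs) <= Dk_opnorm k F x * \big[Rmult/1]_(i < m) vnorm (hs i).
Proof.
have HL0 := opnorm_ge0 k x.
elim: m => [|m IH] Hm hs H.
  rewrite big_ord0 Rmult_1_r. case: (opnorm_spec k x) => Hub _. apply: Hub.
  exists hs; split => //. move=> i Hi; exact: H.
have Hmk : (m < k)%nat by [].
have Hp : 0 <= \big[Rmult/1]_(i < m.+1) vnorm (hs i) by apply: prod_ge0 => i; exact: vnorm_ge0.
case: (Req_dec (vnorm (hs m)) 0) => Hz.
  have := vnorm_eq0 Hz => Ez.
  have -> : Dk k F x hs = vzero by rewrite -(upd_same hs m) Ez Dk_slot_zero.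
  rewrite vnorm_zero. nra.
set w := hs m.
have Hw := vnorm_ge0 w. have Hz' : vnorm w <> 0 := Hz.
have Hwp : 0 < vnorm w by lra.
set hs' := upd hs m (vscale (/ vnorm w) w).
have Hhs' : forall i, (m <= i)%nat -> (i < k)%nat -> vnorm (hs' i) <= 1.
  move=> i Hi Hik. rewrite /hs' /upd; case: eqP => [_|/eqP Hne].
    rewrite vnorm_scale Rabs_right; last by apply: Rle_ge; apply: Rlt_le; apply: Rinv_0_lt_compat.
    rewrite Rinv_l //; lra.
  apply: H => //. by rewrite ltn_neqAle eq_sym Hne Hi.
have IH' := IH (ltnW Hm) hs' Hhs'.
have Eq : Dk k F x hs = vscale (vnorm w) (Dk k F x hs').
  have HL := Dk_slot_linear hs x Hmk. case: HL => _ HS.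
  rewrite /hs' -HS. rewrite -{1}(upd_same hs m). congr (Dk k F x (upd hs m _)).
  rewrite /w; apply: functional_extensionality => j; rewrite /vscale; field; exact: Hz.
have Ep : \big[Rmult/1]_(i < m) vnorm (hs' i) = \big[Rmult/1]_(i < m) vnorm (hs i).
  apply: eq_bigr => i _; rewrite /hs' upd_other //. move=> E; have := ltn_ord i; rewrite E ltnn //.
rewrite Ep in IH'.
rewrite Eq vnorm_scale Rabs_right; last lra.
rewrite big_ord_recr /=.
have Hp' : 0 <= \big[Rmult/1]_(i < m) vnorm (hs i) by apply: prod_ge0 => i; exact: vnorm_ge0.
have -> : Dk_opnorm k F x * (\big[Rmult/1]_(i < m) vnorm (hs i) * vnorm (hs m)) =
   vnorm w * (Dk_opnorm k F x * \big[Rmult/1]_(i < m) vnorm (hs i)) by rewrite /w; ring.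
apply: Rmult_le_compat_l => //.
Qed.

Lemma opnorm_bound k x hs :
  vnorm (Dk k F x hs) <= Dk_opnorm k F x * \big[Rmult/1]_(i < k) vnorm (hs i).
Proof. apply: opnorm_bound_aux => // i H1 H2. by move: (leq_ltn_trans H1 H2); rewrite ltnn. Qed.

Lemma slot_prod (Psi : vec d -> vec d -> vec d) (DPsi : vec d -> vec d -> vec d) (u Du : vec d -> vec d) x :
  (forall v, isfr (fun z => Psi z v) x (DPsi v)) ->
  (forall z, is_linear (Psi z)) ->
  isfr u x Du ->
  isfr (fun z => Psi z (u z)) x (fun h => vadd (DPsi (u x) h) (Psi x (Du h))).
Proof.
move=> HP HL Hu.
have H1 : isfr (fun z => \big[vadd/vzero]_(j < d) vscale (u z j) (Psi z (e_basis j))) x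
   (fun h => \big[vadd/vzero]_(j < d) vadd (vscale (Du h j) (Psi x (e_basis j))) (vscale (u x j) (DPsi (e_basis j) h))).
  apply: isfr_vsum => j; exact: isfr_prod.
have DL : forall v h, DPsi v h = \big[vadd/vzero]_(j < d) vscale (v j) (DPsi (e_basis j) h).
  move=> v h.
  have H2 : isfr (fun z => \big[vadd/vzero]_(j < d) vscale (v j) (Psi z (e_basis j))) x
     (fun h => \big[vadd/vzero]_(j < d) vscale (v j) (DPsi (e_basis j) h)).
    apply: isfr_vsum => j; exact: isfr_scale.
  have H3 : isfr (fun z => \big[vadd/vzero]_(j < d) vscale (v j) (Psi z (e_basis j))) x (DPsi v).
    apply: isfr_ext (HP v) => // z; exact: lin_expand.
  by rewrite (isfr_unique H3 H2).
apply: isfr_ext H1.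
- move=> z; rewrite -lin_expand //.
- move=> h; rewrite big_split /= vadd_comm -lin_expand // DL //.
Qed.

Lemma Dk_move_aux k x m : (m <= k)%nat -> forall (U : vec d -> nat -> vec d) (DU : nat -> vec d -> vec d),
  (forall i, (i < m)%nat -> isfr (fun z => U z i) x (DU i)) ->
  (forall i z, (m <= i)%nat -> U z i = U x i) ->
  isfr (fun z => Dk k F z (U z)) x
    (fun h => vadd (Dk k.+1 F x (hcons h (U x)))
                   (\big[vadd/vzero]_(i < m) Dk k F x (upd (U x) i (DU i h)))).
Proof.
elim: m => [|m IH] Hm U DU H1 H2.
  have E : forall z, U z = U x by move=> z; apply: functional_extensionality => i; exact: H2.
  apply: isfr_ext (Dk_isfr k (U x) x).
  - by move=> z; rewrite E.
  - by move=> h; rewrite big_ord0 vadd_comm vadd0v.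
have Hmk : (m < k)%nat by [].
set Psi := fun z v => Dk k F z (upd (U z) m v).
set DPsi := fun v h => vadd (Dk k.+1 F x (hcons h (upd (U x) m v)))
                   (\big[vadd/vzero]_(i < m) Dk k F x (upd (upd (U x) m v) i (DU i h))).
have HP : forall v, isfr (fun z => Psi z v) x (DPsi v).
  move=> v. apply: (IH (ltnW Hm) (fun z => upd (U z) m v) DU).
  - move=> i Hi. apply: isfr_ext (H1 i (ltnW Hi)) => // z.
    rewrite upd_other //. by move=> E; rewrite E ltnn in Hi.
  - move=> i z Hi. rewrite /upd; case: eqP => // /eqP Hne. apply: H2. by rewrite ltn_neqAle eq_sym Hne Hi.
have HL : forall z, is_linear (Psi z) by move=> z; exact: Dk_slot_linear.
have := slot_prod HP HL (H1 m (ltnSn m)).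
apply: isfr_ext.
- by move=> z; rewrite /Psi upd_same.
- move=> h; rewrite /DPsi /Psi upd_same big_ord_recr /= vadd_assoc //.
Qed.

Lemma Dk_move k x (U : vec d -> nat -> vec d) (DU : nat -> vec d -> vec d) :
  (forall i, (i < k)%nat -> isfr (fun z => U z i) x (DU i)) ->
  (forall i z, (k <= i)%nat -> U z i = U x i) ->
  isfr (fun z => Dk k F z (U z)) x
    (fun h => vadd (Dk k.+1 F x (hcons h (U x)))
                   (\big[vadd/vzero]_(i < k) Dk k F x (upd (U x) i (DU i h)))).
Proof. exact: Dk_move_aux. Qed.

End Der.


Section Terms.
Variable d : nat.
Variable A : vec d -> vec d.
Variable F : vec d -> vec d.

Inductive term : Type :=
 | Tzero | Tb (b : vec d) | Tg | TA (t : term) | Tadd (t s : term) | Tsub (t s : term) | TD (ts : tlist)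
with tlist : Type := Tnil | Tcons (t : term) (ts : tlist).

Scheme term_ind2 := Induction for term Sort Prop
  with tlist_ind2 := Induction for tlist Sort Prop.

Fixpoint tlen (ts : tlist) : nat := match ts with Tnil => 0%nat | Tcons _ ts => (tlen ts).+1 end.
Fixpoint tnth (ts : tlist) (i : nat) : term :=
  match ts, i with
  | Tnil, _ => Tzero
  | Tcons t _, O => t
  | Tcons _ ts, S i => tnth ts i
  end.

Fixpoint eval (t : term) (x : vec d) : vec d :=
  match t with
  | Tzero => vzero
  | Tb b => b
  | Tg => vadd (A x) (F x)
  | TA t => A (eval t x)
  | Tadd t s => vadd (eval t x) (eval s x)
  | Tsub t s => vsub (eval t x) (eval s x)
  | TD ts => Dk (tlen ts) F x (evalL ts x)
  end
with evalL (ts : tlist) (x : vec d) : nat -> vec d :=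
  match ts with
  | Tnil => fun _ => vzero
  | Tcons t ts => hcons (eval t x) (evalL ts x)
  end.

Fixpoint deriv (dir : term) (t : term) {struct t} : term :=
  match t with
  | Tzero => Tzero
  | Tb _ => Tzero
  | Tg => Tadd (TA dir) (TD (Tcons dir Tnil))
  | TA t => TA (deriv dir t)
  | Tadd t s => Tadd (deriv dir t) (deriv dir s)
  | Tsub t s => Tsub (deriv dir t) (deriv dir s)
  | TD ts => Tadd (TD (Tcons dir ts)) (dslots dir (fun l => l) ts)
  end
with dslots (dir : term) (ctx : tlist -> tlist) (ts : tlist) {struct ts} : term :=
  match ts with
  | Tnil => Tzero
  | Tcons t ts' => Tadd (TD (ctx (Tcons (deriv dir t) ts'))) (dslots dir (fun l => ctx (Tcons t l)) ts')
  end.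

Lemma evalL_nth ts x i : evalL ts x i = eval (tnth ts i) x.
Proof. elim: ts i => [|t ts IH] [|i] //=. Qed.

Lemma evalL_out ts x i : (tlen ts <= i)%nat -> evalL ts x i = vzero.
Proof. elim: ts i => [|t ts IH] [|i] //= H. exact: IH. Qed.

Lemma dslots_eval dir x ts ctx (Phi : (nat -> vec d) -> vec d) :
  (forall l, tlen l = tlen ts -> Dk (tlen (ctx l)) F x (evalL (ctx l) x) = Phi (evalL l x)) ->
  eval (dslots dir ctx ts) x =
  \big[vadd/vzero]_(i < tlen ts) Phi (upd (evalL ts x) i (eval (deriv dir (tnth ts i)) x)).
Proof.
elim: ts ctx Phi => [|t ts IH] ctx Phi H /=; first by rewrite big_ord0.
rewrite big_ord_recl /=. rewrite H //.
rewrite (@IH (fun l => ctx (Tcons t l)) (fun L => Phi (hcons (eval t x) L))).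
  congr vadd; first by congr Phi; apply: functional_extensionality => -[|j].
  apply: eq_bigr => i _; congr Phi; apply: functional_extensionality => -[|j] //=.
move=> l Hl /=; rewrite H //=. by rewrite Hl.
Qed.

Hypothesis Alin : is_linear A.
Hypothesis Fs : smooth F.

Lemma F_isfr x : isfr F x (fun h => Dk 1 F x (hcons h (fun _ => vzero))).
Proof. exact: (Dk_isfr Fs 0 (fun _ => vzero) x). Qed.

Lemma deriv_correct : forall t x, isfr (eval t) x (fun h => eval (deriv (Tb h) t) x).
Proof.
refine (@term_ind2 (fun t => forall x, isfr (eval t) x (fun h => eval (deriv (Tb h) t) x))
                  (fun ts => forall i x, isfr (eval (tnth ts i)) x (fun h => eval (deriv (Tb h) (tnth ts i)) x)) _ _ _ _ _ _ _ _ _).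
- move=> x; exact: isfr_const.
- move=> b x; exact: isfr_const.
- move=> x /=. apply: isfr_add; [exact: isfr_lin | exact: F_isfr].
- move=> t IH x /=. exact: isfr_comp_lin.
- move=> t IH s IH' x /=. exact: isfr_add.
- move=> t IH s IH' x /=. exact: isfr_sub.
- move=> ts IH x.
  have H := @Dk_move d F Fs (tlen ts) x (fun z => evalL ts z) (fun i h => eval (deriv (Tb h) (tnth ts i)) x).
  have E : forall h, eval (deriv (Tb h) (TD ts)) x = vadd (Dk (tlen ts).+1 F x (hcons h (evalL ts x)))
       (\big[vadd/vzero]_(i < tlen ts) Dk (tlen ts) F x (upd (evalL ts x) i (eval (deriv (Tb h) (tnth ts i)) x))).
    move=> h; rewrite /= (@dslots_eval _ x ts (fun l => l) (fun L => Dk (tlen ts) F x L)) // => l -> //.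
  have H1 : forall i, (i < tlen ts)%nat -> isfr (fun z => evalL ts z i) x (fun h => eval (deriv (Tb h) (tnth ts i)) x).
    move=> i _. apply: isfr_ext (IH i x) => // z; by rewrite evalL_nth.
  have H2 : forall i z, (tlen ts <= i)%nat -> evalL ts z i = evalL ts x i.
    move=> i z Hi; by rewrite !evalL_out.
  apply: isfr_ext (H H1 H2) => // h; by rewrite E.
- move=> i x; exact: isfr_const.
- move=> t IH ts IH' [|i] x /=; [exact: IH | exact: IH'].
Qed.

Lemma deriv_dir : forall t dir x, eval (deriv dir t) x = eval (deriv (Tb (eval dir x)) t) x.
Proof.
refine (@term_ind2 (fun t => forall dir x, eval (deriv dir t) x = eval (deriv (Tb (eval dir x)) t) x)
                  (fun ts => forall i dir x, eval (deriv dir (tnth ts i)) x = eval (deriv (Tb (eval dir x)) (tnth ts i)) x) _ _ _ _ _ _ _ _ _) => //=.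
- by move=> t IH dir x; rewrite IH.
- by move=> t IH s IH' dir x; rewrite IH IH'.
- by move=> t IH s IH' dir x; rewrite IH IH'.
- move=> ts IH dir x. congr vadd.
  rewrite !(@dslots_eval _ x ts (fun l => l) (fun L => Dk (tlen ts) F x L)); try by move=> l ->.
  apply: eq_bigr => i _; by rewrite IH.
- by move=> t IH ts IH' [|i] dir x /=; [rewrite IH | rewrite IH'].
Qed.

Definition gfun : vec d -> vec d := fun x => vadd (A x) (F x).

Definition next (t : term) : term := Tsub (deriv Tg t) (Tadd (TA t) (TD (Tcons t Tnil))).

Lemma next_lie t : eval (next t) = lie gfun (eval t).
Proof.
apply: functional_extensionality => x.
rewrite /lie /=.
have -> : Dfr (eval t) x = fun h => eval (deriv (Tb h) t) x by apply: Dfr_isfr; exact: deriv_correct.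
have -> : Dfr gfun x = fun h => eval (deriv (Tb h) Tg) x.
  apply: Dfr_isfr; exact: (deriv_correct Tg x).
by rewrite deriv_dir.
Qed.

End Terms.


Lemma cv_const (a : R) : Un_cv (fun _ => a) a.
Proof. move=> eps He; exists 0%nat => n _; rewrite /Rdist Rminus_eq_0 Rabs_R0; lra. Qed.

Lemma cv_scal (a : R) u : Un_cv u 0 -> Un_cv (fun m => a * u m) 0.
Proof. move=> H; have := CV_mult _ _ _ _ (cv_const a) H; by rewrite Rmult_0_r. Qed.

Lemma cv_add u v : Un_cv u 0 -> Un_cv v 0 -> Un_cv (fun m => u m + v m) 0.
Proof. move=> H1 H2; have := CV_plus _ _ _ _ H1 H2; by rewrite Rplus_0_r. Qed.

Lemma cv_bounded u l : Un_cv u l -> exists M, forall m, Rabs (u m) <= M.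
Proof.
move=> H. case: (H 1 Rlt_0_1) => N HN.
have Hfin : forall N, exists M, forall m, (m < N)%nat -> Rabs (u m) <= M.
  elim=> [|k [M HM]]; first by exists 0.
  exists (Rmax M (Rabs (u k))) => m Hm.
  case: (ltngtP m k) => Hmk.
  - apply: Rle_trans (HM m Hmk) (Rmax_l _ _).
  - by rewrite ltnS leqNgt Hmk in Hm.
  - rewrite Hmk; exact: Rmax_r.
case: (Hfin N) => M HM.
exists (Rmax M (Rabs l + 1)) => m.
case: (ltnP m N) => Hm; first exact: Rle_trans (HM m Hm) (Rmax_l _ _).
have : (m >= N)%coq_nat by apply/leP.
move/HN; rewrite /Rdist => Hd.
apply: Rle_trans _ (Rmax_r _ _).
have := Rabs_triang_inv (u m) l. lra.
Qed.

Section Est.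
Variable d : nat.
Variable A : vec d -> vec d.
Variable F : vec d -> vec d.
Hypothesis Alin : is_linear A.
Hypothesis Fs : smooth F.

Fixpoint strip (t : term d) : term d :=
  match t with
  | TA t => TA (strip t)
  | Tadd t s => Tadd (strip t) (strip s)
  | Tsub t s => Tsub (strip t) (strip s)
  | TD _ => Tzero d
  | t => t
  end.

Inductive wf (N : nat) : nat -> term d -> Prop :=
 | wf_zero e : wf N e (Tzero d)
 | wf_b e b : wf N e (Tb b)
 | wf_g e : (1 <= e)%nat -> wf N e (Tg d)
 | wf_A e t : wf N e t -> wf N e (TA t)
 | wf_add e t s : wf N e t -> wf N e s -> wf N e (Tadd t s)
 | wf_sub e t s : wf N e t -> wf N e s -> wf N e (Tsub t s)
 | wf_D e s ts : wfl N s ts -> (1 <= tlen ts)%nat -> (tlen ts <= N)%nat ->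
     (s <= e + tlen ts - 1)%nat -> wf N e (TD ts)
with wfl (N : nat) : nat -> tlist d -> Prop :=
 | wfl_nil : wfl N 0 (Tnil d)
 | wfl_cons e s t ts : wf N e t -> wfl N s ts -> wfl N (e + s) (Tcons t ts).

Scheme wf_ind2 := Induction for wf Sort Prop
  with wfl_ind2 := Induction for wfl Sort Prop.

Lemma wf_mono N N' : (N <= N')%nat -> forall e t, wf N e t -> wf N' e t.
Proof.
move=> HN.
refine (@wf_ind2 N (fun e t _ => wf N' e t) (fun s ts _ => wfl N' s ts) _ _ _ _ _ _ _ _ _);
  try by constructor.
move=> e s ts _ IH H1 H2 H3. apply: wf_D IH H1 _ H3. exact: leq_trans H2 HN.
Qed.

Lemma wfl_mono N N' : (N <= N')%nat -> forall s ts, wfl N s ts -> wfl N' s ts.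
Proof.
move=> HN.
refine (@wfl_ind2 N (fun e t _ => wf N' e t) (fun s ts _ => wfl N' s ts) _ _ _ _ _ _ _ _ _);
  try by constructor.
move=> e s ts _ IH H1 H2 H3. apply: wf_D IH H1 _ H3. exact: leq_trans H2 HN.
Qed.

Lemma wf_deriv : forall t N e, wf N e t -> wf N.+1 e (deriv (Tg d) t).
Proof.
refine (@term_ind2 d (fun t => forall N e, wf N e t -> wf N.+1 e (deriv (Tg d) t))
  (fun ts => forall N e s ctx, (forall l, tlen l = tlen ts -> wfl N.+1 s l -> wf N.+1 e (TD (ctx l))) ->
      wfl N s ts -> wf N.+1 e (dslots (Tg d) ctx ts)) _ _ _ _ _ _ _ _ _) => /=.
- move=> *; constructor.
- move=> *; constructor.
- move=> N e H; inversion H; subst. apply: wf_add; first by apply: wf_A; apply: wf_g.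
  apply: (@wf_D _ _ (1 + 0)%nat); rewrite /= //; last by rewrite addn0 addnK.
  apply: wfl_cons; [exact: wf_g | exact: wfl_nil].
- move=> t IH N e H; inversion H; subst; constructor; exact: IH.
- move=> t IH s IH' N e H; inversion H; subst; constructor; [exact: IH | exact: IH'].
- move=> t IH s IH' N e H; inversion H; subst; constructor; [exact: IH | exact: IH'].
- move=> ts IH N e H; inversion H; subst. constructor.
  + apply: (@wf_D _ _ (1 + s)%nat) => /=.
    * constructor; [by constructor | exact: (wfl_mono (leqnSn N))].
    * done.
    * by rewrite ltnS.
    * move: H2 H5; lia.
  + apply: (IH N e s) => // l Hl Hw. apply: wf_D Hw _ _ _; rewrite Hl //. exact: leqW.
- move=> N e s ctx _ _; constructor.
- move=> t IH ts IH' N e s ctx Hctx Hw; inversion Hw; subst. constructor.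
  + apply: Hctx => //. constructor; [exact: IH | exact: (wfl_mono (leqnSn N))].
  + apply: (IH' N e s0) => // l Hl Hl'. apply: Hctx; first by rewrite /= Hl.
    constructor => //. exact: (wf_mono (leqnSn N)).
Qed.

Lemma wf_next N t : wf N 0 t -> wf N.+1 0 (next t).
Proof.
move=> H. constructor; first exact: wf_deriv.
constructor; first by constructor; exact: (wf_mono (leqnSn N)).
apply: (@wf_D _ _ (0 + 0)%nat) => //=. constructor; [exact: (wf_mono (leqnSn N)) | constructor].
Qed.

Inductive NG : term d -> Prop :=
 | NG_zero : NG (Tzero d)
 | NG_b b : NG (Tb b)
 | NG_A t : NG t -> NG (TA t)
 | NG_add t s : NG t -> NG s -> NG (Tadd t s)
 | NG_sub t s : NG t -> NG s -> NG (Tsub t s)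
 | NG_D ts : NG (TD ts).

Lemma NG_dslots ctx ts : NG (dslots (Tg d) ctx ts).
Proof. elim: ts ctx => [|t ts IH] ctx /=; constructor => //; constructor. Qed.

Lemma NG_deriv t : NG t -> NG (deriv (Tg d) t).
Proof.
elim=> /= *; try (constructor; by auto using NG_dslots, NG_D).
Qed.

Lemma NG_next t : NG t -> NG (next t).
Proof. move=> H; constructor; [exact: NG_deriv | constructor; constructor => //; constructor]. Qed.

Lemma strip_dslots x ctx ts : eval A F (strip (dslots (Tg d) ctx ts)) x = vzero.
Proof. elim: ts ctx => [|t ts IH] ctx //=. rewrite IH; vext. Qed.

Lemma strip_deriv x t : NG t -> eval A F (strip (deriv (Tg d) t)) x = vzero.
Proof.
elim=> //=.
- move=> t0 _ ->; exact: lin_zero.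
- move=> t0 s _ -> _ ->; vext.
- move=> t0 s _ -> _ ->; vext.
- move=> ts; rewrite strip_dslots; vext.
Qed.

Fixpoint Wt (b : vec d) (j : nat) : term d :=
  match j with O => Tb b | S j => next (Wt b j) end.

Fixpoint sj (b : vec d) (j : nat) : vec d :=
  match j with O => b | S j => vsub vzero (vadd (A (sj b j)) vzero) end.

Lemma Wt_NG b j : NG (Wt b j).
Proof. elim: j => [|j IH] /=; [constructor | exact: NG_next]. Qed.

Lemma Wt_wf b j : wf j 0 (Wt b j).
Proof. elim: j => [|j IH] /=; [constructor | exact: wf_next]. Qed.

Lemma Wt_strip b j x : eval A F (strip (Wt b j)) x = sj b j.
Proof.
elim: j => [|j IH] //=. rewrite IH strip_deriv //. exact: Wt_NG.
Qed.

Lemma sj_eq b j : sj b j = vscale ((-1) ^ j) (Nat.iter j A b).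
Proof.
elim: j => [|j IH] /=; first vext.
rewrite IH. case: Alin => _ HS. rewrite HS; vext.
Qed.

Lemma Wt_lie b j : eval A F (Wt b j.+1) = lie (gfun A F) (eval A F (Wt b j)).
Proof. exact: next_lie. Qed.

Variable ds : nat.
Variable y : nat -> vec d.
Variable c : R.
Hypothesis Hc : 0 < c.
Hypothesis Hy : forall m, c <= vnorm (y m).
Variable K : R.
Hypothesis HK : forall x z, vnorm (vsub (F x) (F z)) <= K * vnorm (vsub x z).
Hypothesis Hcv : forall k : nat, (1 <= k)%nat -> (k <= ds - 1)%nat ->
     Un_cv (fun m => vnorm (y m) ^ (k - 1) * Dk_opnorm k F (y m)) 0.

Lemma r_pos m : 0 < vnorm (y m).
Proof. have := Hy m; lra. Qed.

Lemma pow_weak a b m : (a <= b)%nat -> vnorm (y m) ^ a <= / c ^ (b - a) * vnorm (y m) ^ b.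
Proof.
move=> Hab. have Hr := r_pos m.
have Eb : vnorm (y m) ^ b = vnorm (y m) ^ a * vnorm (y m) ^ (b - a) by rewrite -pow_add; congr (_ ^ _); lia.
have Hca : 0 < c ^ (b - a) by apply: pow_lt.
have Hle : c ^ (b - a) <= vnorm (y m) ^ (b - a) by apply: pow_incr; have := Hy m; lra.
have Hra : 0 < vnorm (y m) ^ a by apply: pow_lt.
rewrite Eb. apply: (Rmult_le_reg_l (c ^ (b - a))) => //.
have -> : c ^ (b - a) * (/ c ^ (b - a) * (vnorm (y m) ^ a * vnorm (y m) ^ (b - a))) =
   vnorm (y m) ^ a * vnorm (y m) ^ (b - a) by field; lra.
rewrite Rmult_comm. apply: Rmult_le_compat_l; lra.
Qed.

Lemma g_bound : exists G, forall m, nrm1 (gfun A F (y m)) <= G * vnorm (y m).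
Proof.
set CA := lconst A. set F0 := nrm1 (F vzero).
have HCA : 0 <= CA := lconst_ge0 A. have HF0 : 0 <= F0 := nrm1_ge0 _. have Hd := pos_INR d.
exists (CA * INR d + INR d * Rabs K + F0 / c) => m.
have Hr := r_pos m. have Hym := Hy m.
rewrite /gfun. apply: Rle_trans (nrm1_add _ _) _.
have H1 : nrm1 (A (y m)) <= CA * INR d * vnorm (y m).
  apply: Rle_trans (lin_bound _ Alin) _. rewrite Rmult_assoc. apply: Rmult_le_compat_l => //.
  exact: nrm1_le_vnorm.
have H2 : nrm1 (F (y m)) <= INR d * Rabs K * vnorm (y m) + F0.
  have -> : F (y m) = vadd (vsub (F (y m)) (F vzero)) (F vzero) by vext.
  apply: Rle_trans (nrm1_add _ _) _. apply: Rplus_le_compat_r.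
  apply: Rle_trans (nrm1_le_vnorm _) _. rewrite Rmult_assoc. apply: Rmult_le_compat_l => //.
  apply: Rle_trans (HK _ _) _.
  have -> : vsub (y m) vzero = y m by vext.
  apply: Rmult_le_compat_r; [exact: vnorm_ge0 | exact: Rle_abs].
have H3 : F0 <= F0 / c * vnorm (y m).
  have -> : F0 / c * vnorm (y m) = F0 * (vnorm (y m) / c) by field; lra.
  have : 1 <= vnorm (y m) / c by apply: (Rmult_le_reg_r c) => //; field_simplify; lra.
  nra.
lra.
Qed.

Definition Bd e (t : term d) := exists M, forall m, nrm1 (eval A F t (y m)) <= M * vnorm (y m) ^ e.
Definition Sm e (t : term d) := exists beta : nat -> R, Un_cv beta 0 /\
  forall m, nrm1 (vsub (eval A F t (y m)) (eval A F (strip t) (y m))) <= beta m * vnorm (y m) ^ e.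
Definition BdL s (ts : tlist d) := exists M, forall m,
  \big[Rmult/1]_(i < tlen ts) vnorm (evalL A F ts (y m) i) <= M * vnorm (y m) ^ s.

Lemma est N : (N <= ds - 1)%nat -> forall e t, wf N e t -> Bd e t /\ Sm e t.
Proof.
move=> HN.
have Hrp := r_pos. have Hpos : forall m e, 0 <= vnorm (y m) ^ e by move=> m e; apply: pow_le; have := Hrp m; lra.
refine (@wf_ind2 N (fun e t _ => Bd e t /\ Sm e t) (fun s ts _ => BdL s ts) _ _ _ _ _ _ _ _ _).
- move=> e; split.
  + exists 0 => m /=; rewrite nrm1_zero; have := Hpos m e; lra.
  + exists (fun _ => 0); split; first exact: cv_const.
    move=> m /=; have -> : vsub (@vzero d) vzero = vzero by vext. rewrite nrm1_zero; lra.
- move=> e b; split.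
  + exists (nrm1 b * / c ^ (e - 0)) => m /=.
    have := pow_weak m (leq0n e). rewrite /= => H.
    have := nrm1_ge0 b. nra.
  + exists (fun _ => 0); split; first exact: cv_const.
    move=> m /=; have -> : vsub b b = vzero by vext. rewrite nrm1_zero; lra.
- move=> e He; split.
  + case: g_bound => G HG. exists (Rabs G * / c ^ (e - 1)) => m /=.
    have := pow_weak m He. rewrite /= Rmult_1_r => H.
    have := HG m. rewrite /gfun => H'.
    have : G * vnorm (y m) <= Rabs G * vnorm (y m) by apply: Rmult_le_compat_r; [exact: vnorm_ge0 | exact: Rle_abs].
    have := Rabs_pos G. nra.
  + exists (fun _ => 0); split; first exact: cv_const.
    move=> m /=; have -> : forall v : vec d, vsub v v = vzero by move=> v; vext. rewrite nrm1_zero; lra.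
- move=> e t _ [[M HM] [be [Hbe Hb]]]; split.
  + exists (lconst A * M) => m /=. apply: Rle_trans (lin_bound _ Alin) _.
    rewrite Rmult_assoc; apply: Rmult_le_compat_l; [exact: lconst_ge0 | exact: HM].
  + exists (fun m => lconst A * be m); split; first exact: cv_scal.
    move=> m /=. rewrite -lin_sub //. apply: Rle_trans (lin_bound _ Alin) _.
    rewrite Rmult_assoc; apply: Rmult_le_compat_l; [exact: lconst_ge0 | exact: Hb].
- move=> e t s _ [[M1 H1] [b1 [Hb1 Hb1']]] _ [[M2 H2] [b2 [Hb2 Hb2']]]; split.
  + exists (M1 + M2) => m /=. apply: Rle_trans (nrm1_add _ _) _. have := H1 m; have := H2 m. lra.
  + exists (fun m => b1 m + b2 m); split; first exact: cv_add.
    move=> m /=. 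
    have -> : vsub (vadd (eval A F t (y m)) (eval A F s (y m))) (vadd (eval A F (strip t) (y m)) (eval A F (strip s) (y m)))
      = vadd (vsub (eval A F t (y m)) (eval A F (strip t) (y m))) (vsub (eval A F s (y m)) (eval A F (strip s) (y m))) by vext.
    apply: Rle_trans (nrm1_add _ _) _. have := Hb1' m; have := Hb2' m. lra.
- move=> e t s _ [[M1 H1] [b1 [Hb1 Hb1']]] _ [[M2 H2] [b2 [Hb2 Hb2']]]; split.
  + exists (M1 + M2) => m /=. apply: Rle_trans (nrm1_sub _ _) _. have := H1 m; have := H2 m. lra.
  + exists (fun m => b1 m + b2 m); split; first exact: cv_add.
    move=> m /=. 
    have -> : vsub (vsub (eval A F t (y m)) (eval A F s (y m))) (vsub (eval A F (strip t) (y m)) (eval A F (strip s) (y m)))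
      = vsub (vsub (eval A F t (y m)) (eval A F (strip t) (y m))) (vsub (eval A F s (y m)) (eval A F (strip s) (y m))) by vext.
    apply: Rle_trans (nrm1_sub _ _) _. have := Hb1' m; have := Hb2' m. lra.
- move=> e s ts _ [M HM] Hk1 HkN Hs.
  set k := tlen ts.
  have Hkd : (k <= ds - 1)%nat by apply: leq_trans HkN HN.
  have Hc1 := Hcv Hk1 Hkd.
  set C := / c ^ (e + k - 1 - s).
  have HC : 0 <= C by apply: Rlt_le; apply: Rinv_0_lt_compat; apply: pow_lt.
  set beta := fun m => INR d * Rabs M * C * (vnorm (y m) ^ (k - 1) * Dk_opnorm k F (y m)).
  have Hbeta : Un_cv beta 0 by apply: cv_scal.
  have Hmain : forall m, nrm1 (eval A F (TD ts) (y m)) <= beta m * vnorm (y m) ^ e.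
    move=> m /=. rewrite -/k.
    apply: Rle_trans (nrm1_le_vnorm _) _.
    have Hd := pos_INR d. have Hop := opnorm_ge0 Fs k (y m).
    have H1 := opnorm_bound Fs k (y m) (evalL A F ts (y m)).
    have H2 := HM m. rewrite -/k in H2.
    have H3 : vnorm (y m) ^ s <= C * vnorm (y m) ^ (e + k - 1) := pow_weak m Hs.
    have Ep : vnorm (y m) ^ (e + k - 1) = vnorm (y m) ^ (k - 1) * vnorm (y m) ^ e.
      rewrite -pow_add; congr (_ ^ _); move: Hk1; rewrite -/k; lia.
    rewrite Ep in H3.
    have Hp : 0 <= \big[Rmult/1]_(i < k) vnorm (evalL A F ts (y m) i) by apply: prod_ge0 => i; exact: vnorm_ge0.
    have H4 : \big[Rmult/1]_(i < k) vnorm (evalL A F ts (y m) i) <= Rabs M * (C * (vnorm (y m) ^ (k - 1) * vnorm (y m) ^ e)).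
      apply: Rle_trans H2 _. have := Hpos m s. have := Rle_abs M.
      have := Rabs_pos M. move=> HM1 HM2 HM3.
      have : M * vnorm (y m) ^ s <= Rabs M * vnorm (y m) ^ s by apply: Rmult_le_compat_r.
      have : Rabs M * vnorm (y m) ^ s <= Rabs M * (C * (vnorm (y m) ^ (k - 1) * vnorm (y m) ^ e)) by apply: Rmult_le_compat_l.
      lra.
    rewrite /beta.
    have := Hpos m (k - 1)%nat. have := Hpos m e. have := Rabs_pos M.
    move=> *.
    apply: Rle_trans (Rmult_le_compat_l _ _ _ Hd H1) _.
    have : Dk_opnorm k F (y m) * \big[Rmult/1]_(i < k) vnorm (evalL A F ts (y m) i) <=
       Dk_opnorm k F (y m) * (Rabs M * (C * (vnorm (y m) ^ (k - 1) * vnorm (y m) ^ e)))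
      by apply: Rmult_le_compat_l.
    move=> H5.
    have -> : INR d * Rabs M * C * (vnorm (y m) ^ (k - 1) * Dk_opnorm k F (y m)) * vnorm (y m) ^ e =
       INR d * (Dk_opnorm k F (y m) * (Rabs M * (C * (vnorm (y m) ^ (k - 1) * vnorm (y m) ^ e)))) by ring.
    apply: Rmult_le_compat_l => //.
  split.
  + case: (cv_bounded Hbeta) => Mb HMb. exists Mb => m.
    apply: Rle_trans (Hmain m) _. apply: Rmult_le_compat_r; first exact: Hpos.
    exact: Rle_trans (Rle_abs _) (HMb m).
  + exists beta; split => // m /=.
    have -> : vsub (Dk (tlen ts) F (y m) (evalL A F ts (y m))) vzero = Dk (tlen ts) F (y m) (evalL A F ts (y m)) by vext.
    exact: Hmain.
- exists 1 => m /=. rewrite big_ord0 /=; lra.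
- move=> e s t ts _ [[M1 H1] _] _ [M2 H2]. exists (M1 * M2) => m /=.
  rewrite big_ord_recl /=.
  have E : \big[Rmult/1]_(i < tlen ts) vnorm (hcons (eval A F t (y m)) (evalL A F ts (y m)) (bump 0 i)) =
     \big[Rmult/1]_(i < tlen ts) vnorm (evalL A F ts (y m) i) by apply: eq_bigr.
  rewrite E pow_add.
  have Hp : 0 <= \big[Rmult/1]_(i < tlen ts) vnorm (evalL A F ts (y m) i) by apply: prod_ge0 => i; exact: vnorm_ge0.
  have := H1 m. have := H2 m. have := vnorm_le_nrm1 (eval A F t (y m)). have := vnorm_ge0 (eval A F t (y m)).
  move=> *.
  have -> : M1 * M2 * (vnorm (y m) ^ e * vnorm (y m) ^ s) = (M1 * vnorm (y m) ^ e) * (M2 * vnorm (y m) ^ s) by ring.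
  apply: Rmult_le_compat => //. lra.
Qed.

End Est.

Module MatPart.
From mathcomp Require Import all_algebra.
From mathcomp Require Import Rstruct fingroup perm.
Import GRing.Theory.
Local Open Scope ring_scope.

Lemma cv_big (I : Type) (r : seq I) (f : nat -> I -> R) (a : I -> R) :
  (forall i, Un_cv (fun m => f m i) (a i)) ->
  Un_cv (fun m => \sum_(i <- r) f m i) (\sum_(i <- r) a i).
Proof.
move=> H; elim: r => [|x r IH].
  rewrite big_nil. have E : (fun m : nat => \sum_(i <- [::]) f m i) = (fun _ => 0) by apply: functional_extensionality => m; rewrite big_nil.
  rewrite E. move=> eps He; exists 0%nat => n _. rewrite /Rdist. rewrite Rminus_eq_0 Rabs_R0. exact: He.
have E : (fun m : nat => \sum_(i <- x :: r) f m i) = (fun m => Rplus (f m x) (\sum_(i <- r) f m i)).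
  by apply: functional_extensionality => m; rewrite big_cons.
rewrite E big_cons. exact: (CV_plus _ _ _ _ (H x) IH).
Qed.

Lemma cv_prod (I : Type) (r : seq I) (f : nat -> I -> R) (a : I -> R) :
  (forall i, Un_cv (fun m => f m i) (a i)) ->
  Un_cv (fun m => \prod_(i <- r) f m i) (\prod_(i <- r) a i).
Proof.
move=> H; elim: r => [|x r IH].
  rewrite big_nil. have E : (fun m : nat => \prod_(i <- [::]) f m i) = (fun _ => 1) by apply: functional_extensionality => m; rewrite big_nil.
  rewrite E. move=> eps He; exists 0%nat => n _. rewrite /Rdist. rewrite Rminus_eq_0 Rabs_R0. exact: He.
have E : (fun m : nat => \prod_(i <- x :: r) f m i) = (fun m => Rmult (f m x) (\prod_(i <- r) f m i)).
  by apply: functional_extensionality => m; rewrite big_cons.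
rewrite E big_cons. exact: (CV_mult _ _ _ _ (H x) IH).
Qed.

Lemma cv_det (n : nat) (M : nat -> 'M[R]_n) (L : 'M[R]_n) :
  (forall i j, Un_cv (fun m => M m i j) (L i j)) -> Un_cv (fun m => \det (M m)) (\det L).
Proof.
move=> H. rewrite /determinant.
apply: cv_big => s.
pose s' : 'S_n := s. set c := ((-1) ^+ s' : R).
have H1 : Un_cv (fun _ => c) c.
  move=> eps He; exists 0%nat => k _. rewrite /Rdist Rminus_eq_0 Rabs_R0. exact: He.
have H2 : Un_cv (fun m => \prod_i M m i (s' i)) (\prod_i L i (s' i)) by apply: cv_prod => i; apply: H.
exact: (CV_mult _ _ _ _ H1 H2).
Qed.


Lemma mat_perturb (d : nat) (I : finType) (C : 'I_d -> I -> R) (v : nat -> I -> vec d) (u : I -> vec d) :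
  (forall l l', \big[Rplus/IZR Z0]_(k : I) Rmult (C l k) (u k l') = if l == l' then IZR (Zpos xH) else IZR Z0) ->
  (forall k l', Un_cv (fun m => v m k l') (u k l')) ->
  exists m, forall w : vec d, exists a : I -> R, w = \big[vadd/vzero]_(k : I) vscale (a k) (v m k).
Proof.
move=> Hcoef Hcv.
pose M := fun m => (\matrix_(l, l') \sum_(k : I) C l k * v m k l' : 'M[R]_d).
have Hl : forall l l', Un_cv (fun m => M m l l') ((1%:M : 'M[R]_d) l l').
  move=> l l'.
  have E1 : (fun m => M m l l') = (fun m => \sum_(k : I) C l k * v m k l').
    by apply: functional_extensionality => m; rewrite /M mxE.
  have E2 : (1%:M : 'M[R]_d) l l' = \sum_(k : I) C l k * u k l'.
    have H0 : \sum_(k : I) C l k * u k l' = (if l == l' then 1 else 0) := Hcoef l l'.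
    rewrite H0 mxE. by case: (l == l').
  rewrite E1 E2. apply: cv_big => k.
  have H1 : Un_cv (fun _ => C l k) (C l k).
    move=> eps He; exists 0%nat => n _. rewrite /Rdist Rminus_eq_0 Rabs_R0. exact: He.
  exact: (CV_mult _ _ _ _ H1 (Hcv k l')).
have Hd := @cv_det d M 1%:M Hl. rewrite det1 in Hd.
case: (Hd R1) => [|N HN]; first exact: Rlt_0_1.
have HN' := HN N (le_n N). rewrite /Rdist in HN'.
have Hdet : \det (M N) != 0.
  apply/eqP => E. rewrite E in HN'. 
  have : Rabs (Rminus (IZR Z0) (IZR (Zpos xH))) = 1%R by rewrite Rabs_minus_sym Rminus_0_r Rabs_R1.
  change (Rlt (Rabs (Rminus (IZR Z0) (IZR (Zpos xH)))) R1) in HN'.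
  rewrite Rabs_minus_sym Rminus_0_r Rabs_R1 in HN'. move=> _; exact (Rlt_irrefl R1 HN').
have HU : M N \in unitmx by rewrite unitmxE unitfE.
exists N => w.
pose X := (\row_(l' < d) w l' : 'rV[R]_d).
pose Y := X *m invmx (M N).
have HY : Y *m M N = X by rewrite /Y mulmxKV.
exists (fun k => \sum_(l < d) Y 0 l * C l k).
apply: functional_extensionality => l'.
rewrite vsum_coord.
change (w l' = \sum_(k : I) (\sum_(l < d) Y 0 l * C l k) * v N k l').
have -> : w l' = X 0 l' by rewrite /X mxE.
rewrite -HY mxE.
under [RHS]eq_bigr do rewrite mulr_suml.
rewrite exchange_big /=. apply: eq_bigr => l _.
rewrite (_ : M N l l' = \sum_(k : I) C l k * v N k l'); last by rewrite /M mxE.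
rewrite mulr_sumr; apply: eq_bigr => k _; by rewrite mulrA.
Qed.

End MatPart.


Lemma lin_comb_map (d : nat) (I : Type) (r : seq I) (a : I -> R) (f : I -> vec d) :
  lin_comb (map (fun k => (a k, f k)) r) = \big[vadd/vzero]_(k <- r) vscale (a k) (f k).
Proof. elim: r => [|x r IH] /=; by rewrite ?big_nil ?big_cons // IH. Qed.

Lemma span_map (d : nat) (I : Type) (P : vec d -> Prop) (u : I -> vec d) :
  spans_Rd P -> (forall w, P w -> exists a k, w = vscale a (u k)) ->
  spans_Rd (fun w => exists k, w = u k).
Proof.
move=> HP H w. case: (HP w) => l [Hl ->]. clear w.
elim: l Hl => [|[a w] l IH] Hl /=; first by exists nil.
inversion Hl; subst. case: (IH H3) => l' [Hl' E].
case: (H w H2) => a' [k Ek].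
exists ((a * a', u k) :: l'); split; first by constructor => //=; exists k.
rewrite /= E Ek; vext.
Qed.

Lemma coef_of (d : nat) (I : finType) (u : I -> vec d) (l : list (R * vec d)) :
  Forall (fun p => exists k, snd p = u k) l ->
  exists C : I -> R, lin_comb l = \big[vadd/vzero]_(k : I) vscale (C k) (u k).
Proof.
elim: l => [|[a w] l IH] Hl /=.
  exists (fun _ => 0). apply: functional_extensionality => j; rewrite vsum_coord big1.
    by rewrite /vzero.
  move=> k _; rewrite /vscale; exact: Rmult_0_l.
inversion Hl; subst. case: (IH H2) => C EC. case: H1 => k0 /= Ek.
exists (fun k => (if k == k0 then a else 0) + C k).
apply: functional_extensionality => j. rewrite vsum_coord /vadd EC vsum_coord Ek /vscale.
have -> : \big[Rplus/0]_(k : I) (((if k == k0 then a else 0) + C k) * u k j) =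
    \big[Rplus/0]_(k : I) (if k == k0 then a * u k0 j else 0) + \big[Rplus/0]_(k : I) (C k * u k j).
  rewrite -sum_plus; apply: eq_bigr => k _; case: eqP => [->|_]; ring.
have -> : \big[Rplus/0]_(k : I) (if k == k0 then a * u k0 j else 0) = a * u k0 j.
  rewrite (bigD1 k0) //= eqxx big1; first ring.
  by move=> k /negbTE ->.
ring.
Qed.

Lemma cv_of_bound (a beta : nat -> R) (L : R) :
  (forall m, Rabs (a m - L) <= beta m) -> Un_cv beta 0 -> Un_cv a L.
Proof.
move=> H Hb eps He. case: (Hb eps He) => N HN. exists N => n Hn.
have := HN n Hn. rewrite /Rdist Rminus_0_r => Hl. have := H n. have := Rle_abs (beta n). lra.
Qed.

Lemma choice_fun (J I : Type) (Q : J -> (I -> R) -> Prop) : (forall j, exists C, Q j C) ->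
  exists Cf : J -> I -> R, forall j, Q j (Cf j).
Proof. move=> H; exists (fun j => epsilon (inhabits (fun _ => 0)) (Q j)) => j; exact: epsilon_spec. Qed.

Theorem mainTheorem12 (n d : nat) (A : vec d -> vec d) (B : vec n -> vec d)
  (F : vec d -> vec d) (ds : nat) (y : nat -> vec d) :
  (n <= d)%nat ->
  is_linear A -> is_linear B ->
  kalman A B -> kalman_index A B ds ->
  smooth F -> globally_lipschitz F ->
  (exists c : R, 0 < c /\ forall m : nat, c <= vnorm (y m)) ->
  (forall k : nat, (1 <= k)%nat -> (k <= ds - 1)%nat ->
     Un_cv (fun m => vnorm (y m) ^ (k - 1) * Dk_opnorm k F (y m)) 0) ->
  exists x0 : vec d, hormander A B F x0.
Proof.
move=> _ Alin _ _ [Hds [Hspan _]] Fs [K HK] [c [Hc Hy]] Hcv.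
pose b := fun k : 'I_ds * 'I_n => B (e_basis k.2).
pose u := fun k : 'I_ds * 'I_n => sj A (b k) k.1.
pose v := fun m (k : 'I_ds * 'I_n) => eval A F (Wt (b k) k.1) (y m).
have Hu : spans_Rd (fun w => exists k, w = u k).
  apply: (span_map Hspan) => w [j [i [Hj ->]]].
  have Hjds : (j < ds)%nat by move: Hds Hj; lia.
  exists ((-1) ^ j); exists (Ordinal Hjds, i).
  rewrite /u /b /= sj_eq // /AjBe. apply: functional_extensionality => l; rewrite /vscale -Rmult_assoc -Rpow_mult_distr.
  have -> : -1 * -1 = 1 by ring. rewrite pow1; ring.
have Hcoef : forall l : 'I_d, exists C : 'I_ds * 'I_n -> R, forall l',
    \big[Rplus/0]_(k : 'I_ds * 'I_n) (C k * u k l') = if l == l' then 1 else 0.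
  move=> l. case: (Hu (e_basis l)) => L [HL EL].
  case: (coef_of HL) => C EC. exists C => l'.
  have := f_equal (fun w => w l') EL. rewrite EC vsum_coord /e_basis /= => <-. done.
case: (choice_fun Hcoef) => Cf HCf.
have Hconv : forall (k : 'I_ds * 'I_n) l', Un_cv (fun m => v m k l') (u k l').
  move=> k l'.
  have HN : (k.1 <= ds - 1)%nat by have := ltn_ord k.1; lia.
  case: (est Alin Fs Hc Hy HK Hcv HN (Wt_wf (b k) k.1)) => _ [beta [Hb Hbm]].
  apply: (cv_of_bound (beta := beta)) => // m.
  have := Hbm m. rewrite (Wt_strip F Alin) pow_O Rmult_1_r => H.
  apply: Rle_trans H. rewrite /v /u. exact: (coord_le_nrm1 (vsub _ _) l').
case: (@MatPart.mat_perturb d _ Cf v u HCf Hconv) => m0 Hm0.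
exists (y m0) => w.
case: (Hm0 w) => a Ew.
exists (map (fun k => (a k, v m0 k)) (index_enum (('I_ds * 'I_n)%type : finType))); split; last by rewrite lin_comb_map.
apply/Forall_forall => p /in_map_iff [k [<- _]] /=.
exists (eval A F (Wt (b k) k.1)); split => //.
have Hbr : forall j, bracket A B F (eval A F (Wt (b k) j.+1)).
  elim=> [|j IH].
  - rewrite (Wt_lie Alin Fs). apply: br_base.
    + left; exists k.2. apply: functional_extensionality => x //.
    + by right.
  - rewrite (Wt_lie Alin Fs). apply: br_step IH _. by right.
move: Hbr; case: k => [[j0 Hj] i] /= Hbr.
case: j0 Hj Hbr => [|j] Hj Hbr; last by right; exact: Hbr.
left; exists i; apply: functional_extensionality => x //.
Qed.
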